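(* Let $\mathcal L$ be a choice logic, $V\subseteq\mathcal U$ a finite set of propositional variables, and $s:\mathcal P(V)\to \mathrm{Obt}(\mathcal L)$ any function. Then there is an $\mathcal L$-formula $F$ such that $\deg_{\mathcal L}(\mathcal I,F)=s(\mathcal I)$ for every $\mathcal I\subseteq V$.
   Context: Fix a countably infinite set $\mathcal U$ of propositional variables. Let $\mathbb N=\{1,2,3,\dots\}$ and $\overline{\mathbb N}=\mathbb N\cup\{\infty\}$, with $n<\infty$ for all $n\in\mathbb N$. An interpretation is a set $\mathcal I\subseteq\mathcal U$ (the variables set to true). A choice logic $\mathcal L$ is specified by a finite set $C_{\mathcal L}$ of binary connective symbols disjoint from $\{\neg,\land,\lor\}$ and, for each $\circ\in C_{\mathcal L}$, a function $\mathrm{opt}_\circ:\mathbb N^2\to\mathbb N$ with $\mathrm{opt}_\circ(k,\ell)\le (k+1)(\ell+1)$ for all $k,\ell$, and a function $\deg_\circ:\mathbb N^2\times\overline{\mathbb N}^2\to\overline{\mathbb N}$ such that for all $k,\ell\in\mathbb N$, $m,n\in\overline{\mathbb N}$, either $\deg_\circ(k,\ell,m,n)\le \mathrm{opt}_\circ(k,\ell)$ or $\deg_\circ(k,\ell,m,n)=\infty$. The $\mathcal L$-formulas are built from variables in $\mathcal U$ using unary $\neg$ and binary $\land,\lor$ and the connectives in $C_{\mathcal L}$. The optionality $\mathrm{opt}_{\mathcal L}$ of formulas is defined by: $\mathrm{opt}_{\mathcal L}(a)=1$ for $a\in\mathcal U$; $\mathrm{opt}_{\mathcal L}(\neg F)=1$;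 $\mathrm{opt}_{\mathcal L}(F\land G)=\mathrm{opt}_{\mathcal L}(F\lor G)=\max(\mathrm{opt}_{\mathcal L}(F),\mathrm{opt}_{\mathcal L}(G))$; $\mathrm{opt}_{\mathcal L}(F\circ G)=\mathrm{opt}_\circ(\mathrm{opt}_{\mathcal L}(F),\mathrm{opt}_{\mathcal L}(G))$ for $\circ\in C_{\mathcal L}$. The satisfaction degree $\deg_{\mathcal L}(\mathcal I,F)\in\overline{\mathbb N}$ is defined by: $\deg_{\mathcal L}(\mathcal I,a)=1$ if $a\in\mathcal I$ and $\infty$ otherwise; $\deg_{\mathcal L}(\mathcal I,\neg F)=1$ if $\deg_{\mathcal L}(\mathcal I,F)=\infty$ and $\infty$ otherwise; $\deg_{\mathcal L}(\mathcal I,F\land G)=\max(\deg_{\mathcal L}(\mathcal I,F),\deg_{\mathcal L}(\mathcal I,G))$; $\deg_{\mathcal L}(\mathcal I,F\lor G)=\min(\deg_{\mathcal L}(\mathcal I,F),\deg_{\mathcal L}(\mathcal I,G))$; $\deg_{\mathcal L}(\mathcal I,F\circ G)=\deg_\circ(\mathrm{opt}_{\mathcal L}(F),\mathrm{opt}_{\mathcal L}(G),\deg_{\mathcal L}(\mathcal I,F),\deg_{\mathcal L}(\mathcal I,G))$ for $\circ\in C_{\mathcal L}$. A degree $m\in\overline{\mathbb N}$ is obtainable in $\mathcal L$ if there exist an interpretation $\mathcal I$ and an $\mathcal L$-formula $G$ with $\deg_{\mathcal L}(\mathcal I,G)=m$; $\mathrm{Obt}(\mathcal L)$ denotes the set of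 obtainable degrees. $\mathcal P(V)$ is the power set of $V$. *)

(* Defs.v *)
From mathcomp Require Import all_boot.
From mathcomp Require Import finmap.

Set Implicit Arguments.
Unset Strict Implicit.
Unset Printing Implicit Defensive.

(* Propositional variables U := nat (countably infinite).
   Degrees in N-bar = {1,2,...} U {oo} are encoded as [option nat]:
   [Some n] is the degree n (only n >= 1 ever arises), [None] is oo.
   Optionalities in N = {1,2,...} are encoded as [nat] (only values >= 1
   are ever used / constrained). *)

Definition deg_t := option nat.

Definition valid_deg (m : deg_t) : bool :=
  if m is Some k then 0 < k else true.

Definition dmax (m n : deg_t) : deg_t :=
  match m, n with
  | Some a, Some b => Some (maxn a b)
  | _, _ => None
  end.

Definition dmin (m n : deg_t) : deg_t :=
  match m, n with
  | Some a, Some b => Some (minn a b)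
  | Some a, None => Some a
  | None, Some b => Some b
  | None, None => None
  end.

(* A choice logic: a finite set of binary connective symbols (distinct from
   neg/and/or, which are separate constructors of [formula] below), with
   opt_c : N^2 -> N and deg_c : N^2 x Nbar^2 -> Nbar. *)
Record choice_logic := ChoiceLogic {
  conn : finType;
  opt_c : conn -> nat -> nat -> nat;
  deg_c : conn -> nat -> nat -> deg_t -> deg_t -> deg_t;
  opt_c_pos : forall c k l, 0 < k -> 0 < l -> 0 < opt_c c k l;
  opt_c_bound : forall c k l, 0 < k -> 0 < l ->
      opt_c c k l <= k.+1 * l.+1;
  deg_c_bound : forall c k l m n, 0 < k -> 0 < l ->
      valid_deg m -> valid_deg n ->
      (exists d, deg_c c k l m n = Some d /\ 0 < d /\ d <= opt_c c k l)
      \/ deg_c c k l m n = None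
}.

Inductive formula (C : Type) : Type :=
  | FVar of nat
  | FNeg of formula C
  | FAnd of formula C & formula C
  | FOr of formula C & formula C
  | FConn of C & formula C & formula C.

Arguments FVar {C}.

Section Semantics.
Variable L : choice_logic.

Fixpoint optL (F : formula (conn L)) : nat :=
  match F with
  | FVar _ => 1
  | FNeg _ => 1
  | FAnd F G => maxn (optL F) (optL G)
  | FOr F G => maxn (optL F) (optL G)
  | FConn c F G => opt_c c (optL F) (optL G)
  end.

(* An interpretation is a set of variables (those set to true),
   represented by its characteristic function. *)
Fixpoint degL (I : nat -> bool) (F : formula (conn L)) : deg_t :=
  match F with
  | FVar a => if I a then Some 1 else None
  | FNeg F => if degL I F is None then Some 1 else None
  | FAnd F G => dmax (degL I F) (degL I G)
  | FOr F G => dmin (degL I F) (degL I G)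
  | FConn c F G => deg_c c (optL F) (optL G) (degL I F) (degL I G)
  end.

Definition obtainable (m : deg_t) : Prop :=
  exists (I : nat -> bool) (G : formula (conn L)), degL I G = m.

End Semantics.

(* Main.v *)
Require Import Defs.
From mathcomp Require Import all_boot.
From mathcomp Require Import finmap.
Local Open Scope fset_scope.

Section Aux.
Variable L : choice_logic.
Notation form := (formula (conn L)).

Definition ftop : form := FOr (FVar 0) (FNeg (FVar 0)).
Definition fbot : form := FAnd (FVar 0) (FNeg (FVar 0)).

Lemma deg_top J : degL J ftop = Some 1.
Proof. by rewrite /= ; case: (J 0). Qed.
Lemma deg_bot J : degL J fbot = None.
Proof. by rewrite /= ; case: (J 0). Qed.

Lemma valid_all J (F : form) : valid_deg (degL J F) /\ 0 < optL F.
Proof.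
elim: F => [a|F [vF oF]|F [vF oF] G [vG oG]|F [vF oF] G [vG oG]|c F [vF oF] G [vG oG]] /=.
- by case: (J a).
- by case: (degL J F).
- split; last by rewrite leq_max oF.
  by move: vF vG; case: (degL J F) => [a|]; case: (degL J G) => [b|] //= ha hb;
     rewrite leq_max ha.
- split; last by rewrite leq_max oF.
  by move: vF vG; case: (degL J F) => [a|]; case: (degL J G) => [b|] //= ha hb;
     rewrite leq_min ha.
- split; last exact: opt_c_pos.
  case: (deg_c_bound c oF oG vF vG) => [[d [-> [hd _]]]|->] //.
Qed.

Fixpoint cst (I0 : nat -> bool) (F : form) : form :=
  match F with
  | FVar a => if I0 a then ftop else fbot
  | FNeg F => FNeg (cst I0 F)
  | FAnd F G => FAnd (cst I0 F) (cst I0 G)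
  | FOr F G => FOr (cst I0 F) (cst I0 G)
  | FConn c F G => FConn c (cst I0 F) (cst I0 G)
  end.

Lemma opt_cst I0 F : optL (cst I0 F) = optL F.
Proof.
elim: F => [a|F IF|F IF G IG|F IF G IG|c F IF G IG] /=; rewrite ?IF ?IG //.
by case: (I0 a).
Qed.

Lemma deg_cst I0 J F : degL J (cst I0 F) = degL I0 F.
Proof.
elim: F => [a|F IF|F IF G IG|F IF G IG|c F IF G IG] /=; rewrite ?IF ?IG ?opt_cst //.
by case: (I0 a); rewrite ?deg_top ?deg_bot.
Qed.

Fixpoint charL (p : nat -> bool) (l : seq nat) : form :=
  match l with
  | [::] => ftop
  | a :: l => FAnd (if p a then FVar a else FNeg (FVar a)) (charL p l)
  end.

Lemma deg_charL (p : nat -> bool) (f : nat -> bool) l :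
  degL f (charL p l) =
  if all (fun a => p a == f a) l then Some 1 else None.
Proof.
elim: l => [|a l IH] /=; first exact: deg_top.
rewrite IH; case: (p a); destruct (f a) eqn:E; simpl; destruct (all _ l); simpl.
all: rewrite ?E //.
Qed.

Lemma char_eq (V I J : {fset nat}) : I `<=` V -> J `<=` V ->
  all (fun a => (a \in I) == (a \in J)) V = (J == I).
Proof.
move=> /fsubsetP IV /fsubsetP JV.
apply/allP/eqP => [H|->]; last by move=> a _; rewrite eqxx.
apply/fsetP => x.
case xI: (x \in I); case xJ: (x \in J) => //.
- by have := H x (IV x (introT idP xI)); rewrite xI xJ.
- by have := H x (JV x (introT idP xJ)); rewrite xI xJ.
Qed.

End Aux.

Theorem mainTheorem4 (L : choice_logic) (V : {fset nat})
    (s : {fset nat} -> deg_t)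
    (hs : forall I : {fset nat}, I `<=` V -> @obtainable L (s I)) :
  exists F : formula (conn L),
    forall I : {fset nat}, I `<=` V -> @degL L (fun x => x \in I) F = s I.
Proof.
suff H : forall l : seq {fset nat}, (forall I, I \in l -> I `<=` V) ->
  exists F : formula (conn L), forall J, J `<=` V ->
    degL (fun x => x \in J) F = if J \in l then s J else None.
  have hl : forall I, I \in enum_fset (fpowerset V) -> I `<=` V.
    by move=> I; rewrite fpowersetE.
  have [F HF] := H _ hl.
  by exists F => J hJ; rewrite HF // fpowersetE hJ.
elim => [|I l IH] hl.
  by exists (fbot L) => J _; rewrite deg_bot.
have [F HF] := IH (fun I' h => hl I' (mem_behead (s:=I :: l) h)).
have hI : I `<=` V by apply: hl; rewrite inE eqxx.
have [I0 [G HG]] := hs I hI.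
exists (FOr (FAnd (charL L (fun x => x \in I) V) (cst L I0 G)) F) => J hJ /=.
rewrite deg_charL deg_cst HF // char_eq // in_cons HG.
have vG := (@valid_all L I0 G).1; rewrite HG in vG.
case: eqP => [->|_] /=.
  case: (s I) vG => [a|] //= ha; case: (I \in l) => //=;
    rewrite ?(maxn_idPr ha) ?minnn //.
by case: (s _) => [b|] //; case: (_ \in l).
Qed.
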